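(* In the setting below, for any two points $p,q\in X$ exactly one of the following holds or at least one of: (i) $S_p\cap S_q=\emptyset$; (ii) $S_p\subseteq S_q$ or $S_q\subseteq S_p$; (iii) $S_p\cup S_q=E$ and $|S_p\cap S_q|=1$; (iv) $S_p\cup S_q=E$ and $|S_p\cap S_q|=n-1$. That is, at least one of (i)–(iv) holds.
   Context: Setting: $E=\{e_0,\dots,e_n\}\subset\mathbb R^n$ is the vertex set of an $n$-simplex with $e_0+\cdots+e_n=0$, and $X\subset\mathbb R^n\setminus\{0\}$ is a finite set with $E\subseteq X$, no element of $X$ a positive multiple of another, such that every $n+1$ points of $X$ are in good position. (A finite set $A$ is in conical position if $0\notin\operatorname{conv}A$ and no point of $A$ lies in the positive hull—set of nonnegative linear combinations—of the other points; it is in good position otherwise.) For $p\in X$, the support $S_p$ is the minimal subset of $E$ whose positive hull contains $p$. *)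

(* Defs.v *)
From HB Require Import structures.
From mathcomp Require Import all_boot all_order all_algebra.
Set Implicit Arguments. Unset Strict Implicit. Unset Printing Implicit Defensive.
Import Order.TTheory GRing.Theory Num.Theory.
Local Open Scope ring_scope.

(* x lies in the positive hull (nonnegative linear combinations) of the
   finite set of points listed (without repetition) in A. *)
Definition in_pos_hull (R : realFieldType) (n : nat) (A : seq 'rV[R]_n)
    (x : 'rV[R]_n) : Prop :=
  exists c : 'rV[R]_n -> R,
    (forall a, 0 <= c a) /\ \sum_(a <- A) c a *: a = x.

Definition in_conv_hull (R : realFieldType) (n : nat) (A : seq 'rV[R]_n)
    (x : 'rV[R]_n) : Prop :=
  exists c : 'rV[R]_n -> R,
    [/\ forall a, 0 <= c a, \sum_(a <- A) c a = 1 & \sum_(a <- A) c a *: a = x].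

Definition conical_position (R : realFieldType) (n : nat) (A : seq 'rV[R]_n)
    : Prop :=
  ~ in_conv_hull A 0 /\
  (forall a, a \in A -> ~ in_pos_hull (filter (predC1 a) A) a).

Definition good_position (R : realFieldType) (n : nat) (A : seq 'rV[R]_n)
    : Prop := ~ conical_position A.

Definition affinely_independent (R : realFieldType) (n m : nat)
    (E : 'I_m -> 'rV[R]_n) : Prop :=
  forall c : 'I_m -> R,
    \sum_i c i = 0 -> \sum_i c i *: E i = 0 -> forall i, c i = 0.

Definition in_pos_hull_idx (R : realFieldType) (n m : nat)
    (E : 'I_m -> 'rV[R]_n) (S : {set 'I_m}) (p : 'rV[R]_n) : Prop :=
  exists c : 'I_m -> R, (forall i, 0 <= c i) /\ \sum_(i in S) c i *: E i = p.

Definition is_support (R : realFieldType) (n m : nat)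
    (E : 'I_m -> 'rV[R]_n) (p : 'rV[R]_n) (S : {set 'I_m}) : Prop :=
  in_pos_hull_idx E S p /\
  (forall S' : {set 'I_m}, S' \proper S -> ~ in_pos_hull_idx E S' p).

(* Main.v *)
Require Import Defs.
From HB Require Import structures.
From mathcomp Require Import all_boot all_order all_algebra.
From mathcomp Require Import lra zify.
Import Order.TTheory GRing.Theory Num.Theory.
Local Open Scope ring_scope.

Module H.
Set Implicit Arguments.
Unset Strict Implicit.

Lemma const_coord (R : realFieldType) n (E : 'I_n.+1 -> 'rV[R]_n) :
  affinely_independent E -> \sum_i E i = 0 ->
  forall d : 'I_n.+1 -> R, \sum_i d i *: E i = 0 -> forall i j, d i = d j.
Proof.
move=> hai hs d hd.
pose m := (\sum_i d i) / (n.+1)%:R.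
have key : forall i, d i - m = 0.
  apply: hai.
    rewrite sumrB sumr_const card_ord /m -[X in _ - X]mulr_natr divfK ?subrr //.
    by rewrite pnatr_eq0.
  under eq_bigr do rewrite scalerBl.
  by rewrite sumrB hd -scaler_sumr hs scaler0 subr0.
move=> i j; have := key i; have := key j; lra.
Qed.

Lemma key_coord (R : realFieldType) n (E : 'I_n.+1 -> 'rV[R]_n) :
  affinely_independent E -> \sum_i E i = 0 ->
  forall f g : 'I_n.+1 -> R, \sum_i f i *: E i = \sum_i g i *: E i ->
  forall i j, f i - g i = f j - g j.
Proof.
move=> hai hs f g h; apply: const_coord hai hs _ _.
under eq_bigr do rewrite scalerBl.
by rewrite sumrB h subrr.
Qed.

Lemma lin_comb (R : realFieldType) n (E : 'I_n.+1 -> 'rV[R]_n) (a b : R) (al be h : 'I_n.+1 -> R) :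
  a *: (\sum_i al i *: E i) + b *: (\sum_i be i *: E i) + \sum_i h i *: E i
  = \sum_i (a * al i + b * be i + h i) *: E i.
Proof.
rewrite !scaler_sumr -!big_split /=; apply: eq_bigr => i _.
by rewrite !scalerDl !scalerA.
Qed.

Lemma Ek_rep (R : realFieldType) n (E : 'I_n.+1 -> 'rV[R]_n) k :
  E k = \sum_i (if i == k then 1 else 0) *: E i.
Proof.
rewrite (bigD1 k) //= eqxx scale1r big1 ?addr0 // => i /negbTE ->.
by rewrite scale0r.
Qed.

Lemma sumL (R : realFieldType) n (E : 'I_n.+1 -> 'rV[R]_n) (p q : 'rV[R]_n)
   (T : {set 'I_n.+1}) (P : pred 'rV[R]_n) (c : 'rV[R]_n -> R) :
  \sum_(a <- p :: q :: map E (enum T) | P a) c a *: a =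
  (if P p then c p else 0) *: p + (if P q then c q else 0) *: q +
  \sum_i (if (i \in T) && P (E i) then c (E i) else 0) *: E i.
Proof.
rewrite !big_cons big_map big_enum_cond big_mkcond /=.
have -> : \sum_i (if (i \in T) && P (E i) then c (E i) *: E i else 0) =
          \sum_i (if (i \in T) && P (E i) then c (E i) else 0) *: E i.
  by apply: eq_bigr => i _; case: ifP; rewrite ?scale0r.
by destruct (P p); destruct (P q); rewrite ?scale0r ?add0r ?addr0 ?addrA.
Qed.

Lemma sumL1 (R : realFieldType) n (E : 'I_n.+1 -> 'rV[R]_n) (p : 'rV[R]_n)
   (T : {set 'I_n.+1}) (P : pred 'rV[R]_n) (c : 'rV[R]_n -> R) :
  \sum_(a <- p :: map E (enum T) | P a) c a *: a =
  (if P p then c p else 0) *: p + 0 *: p +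
  \sum_i (if (i \in T) && P (E i) then c (E i) else 0) *: E i.
Proof.
rewrite !big_cons big_map big_enum_cond big_mkcond /= scale0r addr0.
have -> : \sum_i (if (i \in T) && P (E i) then c (E i) *: E i else 0) =
          \sum_i (if (i \in T) && P (E i) then c (E i) else 0) *: E i.
  by apply: eq_bigr => i _; case: ifP; rewrite ?scale0r.
by destruct (P p); rewrite ?scale0r ?add0r ?addr0 ?addrA.
Qed.

Lemma exists_min (R : realFieldType) n (a : 'I_n.+1 -> R) : exists k, forall i, a k <= a i.
Proof. case: (@arg_minP _ R _ ord0 xpredT a isT) => k _ hk. by exists k => i; apply: hk. Qed.

Definition rep (R : realFieldType) n (E : 'I_n.+1 -> 'rV[R]_n) (p : 'rV[R]_n)
  (P : {set 'I_n.+1}) (al : 'I_n.+1 -> R) :=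
  [/\ forall i, 0 <= al i, forall i, (i \in P) = (0 < al i) & p = \sum_i al i *: E i].

Lemma support_rep (R : realFieldType) n (E : 'I_n.+1 -> 'rV[R]_n) p P :
  \sum_i E i = 0 -> is_support E p P -> exists al, rep E p P al /\ P != setT.
Proof.
move=> hs [[c [c0 hc]] hmin].
pose al i := if i \in P then c i else 0.
have hpal : p = \sum_i al i *: E i.
  rewrite -hc big_mkcond; apply: eq_bigr => i _; rewrite /al.
  by case: ifP => _ //; rewrite scale0r.
have al0 : forall i, 0 <= al i by move=> i; rewrite /al; case: ifP.
have hP : forall i, (i \in P) = (0 < al i).
  move=> i; rewrite /al; case: ifP => iP; last by rewrite ltxx.
  rewrite lt0r c0 andbT; apply/esym/negP => /eqP ci0.
  apply: (hmin (P :\ i)); first exact: properD1.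
  exists c; split => //; rewrite -hc [RHS](bigD1 i) //= ci0 scale0r add0r.
  by apply: eq_bigl => k; rewrite !inE andbC.
exists al; split => //; apply/negP => /eqP PT.
have [k hk] := @exists_min _ _ al.
apply: (hmin [set i | 0 < al i - al k]).
  rewrite PT properT; apply/negP => /eqP/setP/(_ k); rewrite !inE subrr ltxx //.
exists (fun i => al i - al k); split; first by move=> i; rewrite subr_ge0.
rewrite hpal big_mkcond /=; under eq_bigr do rewrite inE.
have -> : \sum_i (if 0 < al i - al k then (al i - al k) *: E i else 0) =
          \sum_i (al i - al k) *: E i.
  apply: eq_bigr => i _; case: ifP => // h.
  have : al i - al k == 0 by apply/eqP/le_anti; rewrite leNgt h subr_ge0 hk.
  by move/eqP ->; rewrite scale0r.
rewrite (eq_bigr (fun i => al i *: E i - al k *: E i)); last by move=> i _; rewrite scalerBl.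
by rewrite sumrB -scaler_sumr hs scaler0 subr0.
Qed.

Lemma conical2 (R : realFieldType) n (E : 'I_n.+1 -> 'rV[R]_n) p q P Q al be
   (T : {set 'I_n.+1}) (u : 'I_n.+1) :
  affinely_independent E -> \sum_i E i = 0 -> injective E ->
  rep E p P al -> rep E q Q be ->
  (forall k, p != E k) -> (forall k, q != E k) -> p != q -> u \notin T ->
  (forall cp cq (f : 'I_n.+1 -> R), 0 <= cp -> 0 <= cq -> (forall i, 0 <= f i) ->
    (forall i k, cp * al i + cq * be i + (if i \in T then f i else 0) =
                 cp * al k + cq * be k + (if k \in T then f k else 0)) ->
    cp = 0 /\ cq = 0) ->
  (forall l (f : 'I_n.+1 -> R), 0 <= l -> (forall i, 0 <= f i) ->
    ~ (forall i k, l * be i + (if i \in T then f i else 0) - al i =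
                   l * be k + (if k \in T then f k else 0) - al k)) ->
  (forall l (f : 'I_n.+1 -> R), 0 <= l -> (forall i, 0 <= f i) ->
    ~ (forall i k, l * al i + (if i \in T then f i else 0) - be i =
                   l * al k + (if k \in T then f k else 0) - be k)) ->
  (forall j, j \in T -> forall l m (f : 'I_n.+1 -> R), 0 <= l -> 0 <= m ->
    (forall i, 0 <= f i) ->
    ~ (forall i k, l * al i + m * be i + (if (i \in T) && (i != j) then f i else 0)
                     - (if i == j then 1 else 0) =
                   l * al k + m * be k + (if (k \in T) && (k != j) then f k else 0)
                     - (if k == j then 1 else 0))) ->
  conical_position (p :: q :: map E (enum T)).
Proof.
move=> hai hs Einj [al0 hP hp] [be0 hQ hq] pE qE pq uT C0 Cp Cq CE.
have Ep : forall i, (E i != p) = true by move=> i; rewrite eq_sym pE.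
have Eq : forall i, (E i != q) = true by move=> i; rewrite eq_sym qE.
split.
  case=> c [c0 c1 hc].
  have := sumL E p q T xpredT c; rewrite /= hc.
  set cp := c p; set cq := c q.
  rewrite [in X in _ = X -> _]hp [in X in _ = X -> _]hq lin_comb.
  under eq_bigr do rewrite andbT.
  move=> h0.
  have h1 : forall i k, (cp * al i + cq * be i + (if i \in T then c (E i) else 0)) - 0 =
     (cp * al k + cq * be k + (if k \in T then c (E k) else 0)) - 0.
    apply: (key_coord hai hs); rewrite -h0 big1 // => i _; exact: scale0r.
  have [cp0 cq0] : cp = 0 /\ cq = 0.
    apply: (C0 _ _ (fun i => c (E i)) (c0 _) (c0 _) (fun i => c0 _)) => i k.
    have := h1 i k; rewrite !subr0.
    done.
  have fT : forall i, i \in T -> c (E i) = 0.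
    move=> i iT; have := h1 i u; rewrite cp0 cq0 iT (negbTE uT); lra.
  move: c1; rewrite !big_cons big_map big_enum /= -/cp -/cq cp0 cq0.
  rewrite big1 ?add0r; last by move=> i iT; apply: fT.
  lra.
move=> a; rewrite !inE => /orP [/eqP-> | /orP [/eqP-> | /mapP[j jT ->]]] [c [c0 hc]];
  rewrite big_filter in hc.
- move: hc; rewrite sumL /= eqxx /= eq_sym pq.
  set cq := c q.
  under eq_bigr do rewrite Ep andbT.
  rewrite [in X in X = _ -> _]hp [in X in X = _ -> _]hq [in X in _ = X -> _]hp lin_comb => h.
  have h1 := key_coord hai hs h.
  apply: (Cp cq (fun i => c (E i)) (c0 _) (fun i => c0 _)) => i k.
  by have := h1 i k; rewrite !mul0r !add0r.
- move: hc; rewrite sumL /= eqxx /= pq.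
  set cp := c p.
  under eq_bigr do rewrite Eq andbT.
  rewrite [in X in X = _ -> _]hp [in X in X = _ -> _]hq [in X in _ = X -> _]hq lin_comb => h.
  have h1 := key_coord hai hs h.
  apply: (Cq cp (fun i => c (E i)) (c0 _) (fun i => c0 _)) => i k.
  by have := h1 i k; rewrite !mul0r !addr0.
- move: hc; rewrite sumL /= pE qE.
  set cp := c p; set cq := c q.
  under eq_bigr do rewrite (inj_eq Einj).
  rewrite hp hq [in X in _ = X -> _]Ek_rep lin_comb => h.
  have h1 := key_coord hai hs h.
  have jT' : j \in T by rewrite -mem_enum.
  exact: (CE j jT' cp cq (fun i => c (E i)) (c0 _) (c0 _) (fun i => c0 _) h1).
Qed.

Lemma conical1 (R : realFieldType) n (E : 'I_n.+1 -> 'rV[R]_n) p P al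
   (T : {set 'I_n.+1}) (u : 'I_n.+1) :
  affinely_independent E -> \sum_i E i = 0 -> injective E ->
  rep E p P al -> (forall k, p != E k) -> u \notin T ->
  (forall cp (f : 'I_n.+1 -> R), 0 <= cp -> (forall i, 0 <= f i) ->
    (forall i k, cp * al i + 0 * al i + (if i \in T then f i else 0) =
                 cp * al k + 0 * al k + (if k \in T then f k else 0)) ->
    cp = 0) ->
  (forall (f : 'I_n.+1 -> R), (forall i, 0 <= f i) ->
    ~ (forall i k, 0 * al i + 0 * al i + (if i \in T then f i else 0) - al i =
                   0 * al k + 0 * al k + (if k \in T then f k else 0) - al k)) ->
  (forall j, j \in T -> forall l (f : 'I_n.+1 -> R), 0 <= l ->
    (forall i, 0 <= f i) ->
    ~ (forall i k, l * al i + 0 * al i + (if (i \in T) && (i != j) then f i else 0)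
                     - (if i == j then 1 else 0) =
                   l * al k + 0 * al k + (if (k \in T) && (k != j) then f k else 0)
                     - (if k == j then 1 else 0))) ->
  conical_position (p :: map E (enum T)).
Proof.
move=> hai hs Einj [al0 hP hp] pE uT C0 Cp CE.
have Ep : forall i, (E i != p) = true by move=> i; rewrite eq_sym pE.
split.
  case=> c [c0 c1 hc].
  have := sumL1 E p T xpredT c; rewrite /= hc.
  set cp := c p.
  rewrite [in X in _ = X -> _]hp lin_comb.
  under eq_bigr do rewrite andbT.
  move=> h0.
  have h1 : forall i k, (cp * al i + 0 * al i + (if i \in T then c (E i) else 0)) - 0 =
     (cp * al k + 0 * al k + (if k \in T then c (E k) else 0)) - 0.
    apply: (key_coord hai hs); rewrite -h0 big1 // => i _; exact: scale0r.
  have cp0 : cp = 0.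
    apply: (C0 _ (fun i => c (E i)) (c0 _) (fun i => c0 _)) => i k.
    by have := h1 i k; rewrite !subr0.
  have fT : forall i, i \in T -> c (E i) = 0.
    move=> i iT; have := h1 i u; rewrite cp0 iT (negbTE uT); lra.
  move: c1; rewrite !big_cons big_map big_enum /= -/cp cp0.
  rewrite big1 ?add0r; last by move=> i iT; apply: fT.
  lra.
move=> a; rewrite !inE => /orP [/eqP-> | /mapP[j jT ->]] [c [c0 hc]];
  rewrite big_filter in hc.
- move: hc; rewrite sumL1 /= eqxx /=.
  under eq_bigr do rewrite Ep andbT.
  rewrite [in X in X = _ -> _]hp [in X in _ = X -> _]hp lin_comb => h.
  have h1 := key_coord hai hs h.
  exact: (Cp (fun i => c (E i)) (fun i => c0 _) h1).
- move: hc; rewrite sumL1 /= pE.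
  set cp := c p.
  under eq_bigr do rewrite (inj_eq Einj).
  rewrite hp [in X in _ = X -> _]Ek_rep lin_comb => h.
  have h1 := key_coord hai hs h.
  have jT' : j \in T by rewrite -mem_enum.
  exact: (CE j jT' cp (fun i => c (E i)) (c0 _) (fun i => c0 _) h1).
Qed.

Lemma rep_out (R : realFieldType) n (E : 'I_n.+1 -> 'rV[R]_n) p P al i :
  rep E p P al -> i \notin P -> al i = 0.
Proof.
case=> al0 hP _; rewrite hP -leNgt => h; apply/le_anti; rewrite h al0 //.
Qed.

Lemma rep_in (R : realFieldType) n (E : 'I_n.+1 -> 'rV[R]_n) p P al i :
  rep E p P al -> i \in P -> 0 < al i.
Proof. by case=> _ hP _; rewrite hP. Qed.

Lemma pos_mul0 (R : realFieldType) (x y w : R) :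
  0 <= x -> 0 < y -> 0 <= w -> x * y + w = 0 -> x = 0.
Proof.
move=> x0 y0 w0 h.
have xy0 : 0 <= x * y by rewrite mulr_ge0 // ltW.
have : x * y = 0 by lra.
by move/eqP; rewrite mulf_eq0 => /orP [/eqP // | /eqP y00]; move: y0; rewrite y00 ltxx.
Qed.

Lemma neqE (R : realFieldType) n (E : 'I_n.+1 -> 'rV[R]_n) p P al j1 j2 z :
  affinely_independent E -> \sum_i E i = 0 ->
  rep E p P al -> j1 \in P -> j2 \in P -> j1 != j2 -> z \notin P ->
  forall k, p != E k.
Proof.
move=> hai hs hr j1P j2P j12 zP k; apply/negP => /eqP hpk.
have h : \sum_i al i *: E i = \sum_i (if i == k then 1 else 0) *: E i.
  by case: hr => _ _ <-; rewrite -Ek_rep.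
have h1 := key_coord hai hs h.
have az := rep_out hr zP.
have [j [jP jk]] : exists j, j \in P /\ (j == k) = false.
  case: (eqVneq j1 k) => [e|ne]; last by exists j1; rewrite (negbTE ne).
  by exists j2; split => //; apply/negbTE; rewrite -e eq_sym.
have := h1 j z; have := rep_in hr jP; rewrite jk az.
case: (z == k) => /=; lra.
Qed.

Lemma neq_pq (R : realFieldType) n (E : 'I_n.+1 -> 'rV[R]_n) p q P Q al be a b :
  affinely_independent E -> \sum_i E i = 0 ->
  rep E p P al -> rep E q Q be -> a \in P -> a \notin Q -> b \notin P -> p != q.
Proof.
move=> hai hs hp hq aP aQ bP; apply/negP => /eqP e.
have h : \sum_i al i *: E i = \sum_i be i *: E i.
  by case: hp => _ _ <-; case: hq => _ _ <-.
have := key_coord hai hs h a b.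
move: (rep_in hp aP) (rep_out hq aQ) (rep_out hp bP).
case: hq => be0 _ _; have := be0 b; lra.
Qed.

Definition goodX (R : realFieldType) n (X : seq 'rV[R]_n) :=
  forall A : seq 'rV[R]_n, uniq A -> {subset A <= X} -> size A = n.+1 ->
    good_position A.

Lemma struct_contra (R : realFieldType) n (E : 'I_n.+1 -> 'rV[R]_n) X p P al j k1 k2 :
  injective E -> affinely_independent E -> \sum_i E i = 0 ->
  p \in X -> (forall i, E i \in X) -> goodX X ->
  rep E p P al -> P != setT -> j \in P -> k1 != k2 ->
  al j < al k1 -> al j < al k2 -> False.
Proof.
move=> Einj hai hs pX EX hgood hr PT jP k12 jk1 jk2.
have [z _ zP] : exists2 z, z \in [set: 'I_n.+1] & z \notin P.
  by apply/subsetPn; rewrite subTset.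
have k1P : k1 \in P.
  by case: (hr) => al0 hP _; rewrite hP; apply: le_lt_trans jk1.
have k1j : (k1 == j) = false.
  by apply/negbTE/negP => /eqP e; move: jk1; rewrite e ltxx.
have k2j : (k2 == j) = false.
  by apply/negbTE/negP => /eqP e; move: jk2; rewrite e ltxx.
have zj : (z == j) = false.
  by apply/negbTE/negP => /eqP e; move: zP; rewrite e jP.
have jk1' : j != k1 by rewrite eq_sym k1j.
have pE := neqE hai hs hr jP k1P jk1' zP.
have := hgood (p :: map E (enum (~: [set j]))).
case.
- rewrite /= map_inj_uniq // enum_uniq andbT.
  by apply/mapP => -[k _ hk]; move: (pE k); rewrite hk eqxx.
- move=> x; rewrite inE => /orP [/eqP -> // | /mapP [k _ ->] //].
- rewrite /= size_map -cardE; have := cardsC [set j]; rewrite cards1 card_ord.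
  by rewrite add1n.
apply: (conical1 (u := j) (P := P) (al := al)) => //.
- by rewrite !inE eqxx.
- move=> cp f cp0 f0 h; have := h j k1; rewrite !inE eqxx k1j /= => e.
  apply: (pos_mul0 cp0 (y := al k1 - al j) _ (f0 k1)); first by rewrite subr_gt0.
  rewrite mulrBr; lra.
- move=> f f0 h; have := h j z; rewrite !inE eqxx zj /= (rep_out hr zP).
  have := f0 z; have := rep_in hr jP; lra.
- move=> i iT l f l0 f0 h.
  have ij : (i == j) = false by move: iT; rewrite !inE => /negbTE.
  have ji : (j == i) = false by rewrite eq_sym.
  have [kk [kkj kki jkk]] : exists kk, [/\ (kk == j) = false, (kk == i) = false & al j < al kk].
    case: (eqVneq k1 i) => [e|ne]; last by exists k1; rewrite (negbTE ne).
    exists k2; split => //; apply/negbTE; rewrite -e eq_sym //.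
  have := h j kk; rewrite !inE eqxx kkj kki ji /= => e.
  have l00 : l = 0.
    apply: (pos_mul0 l0 (y := al kk - al j) _ (f0 kk)); first by rewrite subr_gt0.
    rewrite mulrBr; lra.
  have := h j i; rewrite !inE eqxx ij ji /= l00 eqxx /=; lra.
Qed.

Lemma neq_of (n : nat) (i k : 'I_n.+1) (A : {set 'I_n.+1}) :
  i \in A -> k \notin A -> (i == k) = false.
Proof. by move=> iA kA; apply/negbTE/negP => /eqP e; move: kA; rewrite -e iA. Qed.

Lemma case1_contra (R : realFieldType) n (E : 'I_n.+1 -> 'rV[R]_n) X p q P Q al be
   a b j m :
  injective E -> affinely_independent E -> \sum_i E i = 0 ->
  p \in X -> q \in X -> (forall i, E i \in X) -> goodX X ->
  rep E p P al -> rep E q Q be ->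
  a \in P -> a \notin Q -> b \in Q -> b \notin P -> j \in P -> j \in Q ->
  m \notin P -> m \notin Q -> False.
Proof.
move=> Einj hai hs pX qX EX hgood hp hq aP aQ bQ bP jP jQ mP mQ.
have neq_of' : forall (i k : 'I_n.+1) (A : {set 'I_n.+1}),
    i \notin A -> k \in A -> (i == k) = false.
  by move=> i k A iA kA; rewrite eq_sym (neq_of kA iA).
have jm := neq_of jP mP; have bm := neq_of bQ mQ; have bj := neq_of' _ _ _ bP jP.
have am := neq_of aP mP; have aj := neq_of' _ _ _ aQ jQ.
have pE := neqE hai hs hp aP jP (negbT aj) mP.
have qE := neqE hai hs hq bQ jQ (negbT bj) mQ.
have pq := neq_pq hai hs hp hq aP aQ bP.
have am0 := rep_out hp mP; have bm0 := rep_out hq mQ.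
have ab0 := rep_out hq aQ; have ba0 := rep_out hp bP.
have aj0 := rep_in hp jP; have bj0 := rep_in hq jQ.
have aa0 := rep_in hp aP; have bb0 := rep_in hq bQ.
have := hgood (p :: q :: map E (enum (~: [set m; j]))).
case.
- rewrite !cons_uniq !inE negb_or pq /= map_inj_uniq // enum_uniq andbT.
  apply/andP; split; apply/mapP => -[k _ hk]; [move: (pE k) | move: (qE k)];
    by rewrite hk eqxx.
- move=> x; rewrite !in_cons => /orP [/eqP -> // | /orP [/eqP -> // | /mapP [k _ ->] //]].
- rewrite /= size_map -cardE; have := cardsC [set m; j]; rewrite cards2 card_ord.
  by rewrite eq_sym jm /= add2n.
apply: (conical2 (u := m) (P := P) (Q := Q) (al := al) (be := be)) => //.
- by rewrite !inE eqxx.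
- move=> cp cq f cp0 cq0 f0 h; have := h m j; rewrite !inE !eqxx jm /= am0 bm0 => e.
  have cqb : 0 <= cq * be j by rewrite mulr_ge0 // ltW.
  have cpb : 0 <= cp * al j by rewrite mulr_ge0 // ltW.
  split; [apply: (pos_mul0 cp0 aj0 cqb) | apply: (pos_mul0 cq0 bj0 cpb)]; lra.
- move=> l f l0 f0 h; have := h m j; rewrite !inE !eqxx jm /= am0 bm0 => e1.
  have := h m b; rewrite !inE !eqxx bm bj /= am0 bm0 ba0 => e2.
  have l00 : l = 0 by apply: (pos_mul0 l0 bb0 (f0 b)); lra.
  move: e1; rewrite l00; lra.
- move=> l f l0 f0 h; have := h m j; rewrite !inE !eqxx jm /= am0 bm0 => e1.
  have := h m a; rewrite !inE !eqxx am aj /= am0 bm0 ab0 => e2.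
  have l00 : l = 0 by apply: (pos_mul0 l0 aa0 (f0 a)); lra.
  move: e1; rewrite l00; lra.
- move=> i iT l mm f l0 mm0 f0 h.
  move: iT; rewrite !inE negb_or => /andP [/negbTE im /negbTE ij].
  have mi : (m == i) = false by rewrite eq_sym.
  have ji : (j == i) = false by rewrite eq_sym.
  have := h m j; rewrite !inE !eqxx jm mi ji /= am0 bm0 => e.
  have cqb : 0 <= mm * be j by rewrite mulr_ge0 // ltW.
  have cpb : 0 <= l * al j by rewrite mulr_ge0 // ltW.
  have l00 : l = 0 by apply: (pos_mul0 l0 aj0 cqb); lra.
  have mm00 : mm = 0 by apply: (pos_mul0 mm0 bj0 cpb); lra.
  have := h m i; rewrite !inE !eqxx mi im ij /= am0 bm0 l00 mm00; lra.
Qed.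

Lemma main_contra0 (R : realFieldType) n (E : 'I_n.+1 -> 'rV[R]_n) X p q P Q al be
   u1 u2 v j1 j2 :
  injective E -> affinely_independent E -> \sum_i E i = 0 ->
  p \in X -> q \in X -> (forall i, E i \in X) -> goodX X ->
  rep E p P al -> rep E q Q be -> P != setT ->
  u1 \in P -> u1 \notin Q -> u2 \in P -> u2 \notin Q -> u1 != u2 ->
  v \in Q -> v \notin P -> j1 \in P -> j1 \in Q -> j2 \in P -> j2 \in Q -> j1 != j2 ->
  al u1 <= al u2 -> False.
Proof.
move=> Einj hai hs pX qX EX hgood hp hq PT u1P u1Q u2P u2Q u12 vQ vP j1P j1Q j2P j2Q j12 le12.
case: (ltP (al j1) (al u1)) => h1.
  by apply: (struct_contra Einj hai hs pX EX hgood hp PT j1P u12 h1); apply: lt_le_trans le12.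
case: (ltP (al j2) (al u1)) => h2.
  by apply: (struct_contra Einj hai hs pX EX hgood hp PT j2P u12 h2); apply: lt_le_trans le12.
have neq_of' : forall (i k : 'I_n.+1) (A : {set 'I_n.+1}),
    i \notin A -> k \in A -> (i == k) = false.
  by move=> i k A iA kA; rewrite eq_sym (neq_of kA iA).
have vu := neq_of vQ u1Q; have j1u := neq_of j1Q u1Q; have j2u := neq_of j2Q u1Q.
have j1v := neq_of j1P vP; have j2v := neq_of j2P vP.
have pE := neqE hai hs hp u1P j1P (negbT (neq_of' _ _ _ u1Q j1Q)) vP.
have qE := neqE hai hs hq vQ j1Q (negbT (neq_of' _ _ _ vP j1P)) u1Q.
have pq := neq_pq hai hs hp hq u1P u1Q vP.
have av0 := rep_out hp vP; have bu0 := rep_out hq u1Q.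
have au0 := rep_in hp u1P; have bv0 := rep_in hq vQ.
have bj10 := rep_in hq j1Q; have bj20 := rep_in hq j2Q.
have := hgood (p :: q :: map E (enum (~: [set u1; v]))).
case.
- rewrite !cons_uniq !inE negb_or pq /= map_inj_uniq // enum_uniq andbT.
  apply/andP; split; apply/mapP => -[k _ hk]; [move: (pE k) | move: (qE k)];
    by rewrite hk eqxx.
- move=> x; rewrite !in_cons => /orP [/eqP -> // | /orP [/eqP -> // | /mapP [k _ ->] //]].
- rewrite /= size_map -cardE; have := cardsC [set u1; v]; rewrite cards2 card_ord.
  by rewrite eq_sym vu /= add2n.
apply: (conical2 (u := u1) (P := P) (Q := Q) (al := al) (be := be)) => //.
- by rewrite !inE eqxx.
- move=> cp cq f cp0 cq0 f0 h; have := h u1 j1; rewrite !inE !eqxx j1u j1v /= bu0 => e.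
  have w0 : 0 <= cp * (al j1 - al u1) + f j1.
    by rewrite addr_ge0 // mulr_ge0 // subr_ge0.
  have cq00 : cq = 0 by apply: (pos_mul0 cq0 bj10 w0); rewrite mulrBr; lra.
  have := h u1 v; rewrite !inE !eqxx vu /= bu0 av0 cq00 => e2.
  split => //; apply: (pos_mul0 cp0 au0 (lexx 0)); lra.
- move=> l f l0 f0 h; have := h u1 v; rewrite !inE !eqxx vu /= bu0 av0 => e.
  have : 0 <= l * be v by rewrite mulr_ge0 // ltW.
  lra.
- move=> l f l0 f0 h; have := h u1 v; rewrite !inE !eqxx vu /= bu0 av0 => e.
  have : 0 <= l * al u1 by rewrite mulr_ge0 // ltW.
  lra.
- move=> i iT l mm f l0 mm0 f0 h.
  move: iT; rewrite !inE negb_or => /andP [/negbTE iu /negbTE iv].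
  have ui : (u1 == i) = false by rewrite eq_sym.
  have vi : (v == i) = false by rewrite eq_sym.
  have [jj [jju jjv jji ujj bjj]] : exists jj, [/\ (jj == u1) = false, (jj == v) = false,
       (jj == i) = false, al u1 <= al jj & 0 < be jj].
    case: (eqVneq j1 i) => [e|ne]; last by exists j1; rewrite (negbTE ne).
    exists j2; split => //; apply/negbTE; rewrite -e eq_sym //.
  have := h u1 jj; rewrite !inE !eqxx jju jjv jji ui /= bu0 => e.
  have w0 : 0 <= l * (al jj - al u1) + f jj.
    by rewrite addr_ge0 // mulr_ge0 // subr_ge0.
  have mm00 : mm = 0 by apply: (pos_mul0 mm0 bjj w0); rewrite mulrBr; lra.
  have := h u1 v; rewrite !inE !eqxx vu ui vi /= bu0 av0 mm00 => e2.
  have l00 : l = 0 by apply: (pos_mul0 l0 au0 (lexx 0)); lra.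
  have := h u1 i; rewrite !inE !eqxx ui iu iv /= bu0 l00 mm00; lra.
Qed.

Lemma main_contra (R : realFieldType) n (E : 'I_n.+1 -> 'rV[R]_n) X p q P Q al be
   u1 u2 v j1 j2 :
  injective E -> affinely_independent E -> \sum_i E i = 0 ->
  p \in X -> q \in X -> (forall i, E i \in X) -> goodX X ->
  rep E p P al -> rep E q Q be -> P != setT ->
  u1 \in P -> u1 \notin Q -> u2 \in P -> u2 \notin Q -> u1 != u2 ->
  v \in Q -> v \notin P -> j1 \in P -> j1 \in Q -> j2 \in P -> j2 \in Q -> j1 != j2 ->
  False.
Proof.
move=> Einj hai hs pX qX EX hgood hp hq PT u1P u1Q u2P u2Q u12 vQ vP j1P j1Q j2P j2Q j12.
case: (leP (al u1) (al u2)) => h.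
  exact: (main_contra0 Einj hai hs pX qX EX hgood hp hq PT u1P u1Q u2P u2Q u12 vQ vP j1P j1Q j2P j2Q j12 h).
apply: (main_contra0 Einj hai hs pX qX EX hgood hp hq PT u2P u2Q u1P u1Q _ vQ vP j1P j1Q j2P j2Q j12 (ltW h)).
by rewrite eq_sym.
Qed.

Lemma arith (n i a b p q : nat) : (n.+1 + i = p + q -> i + a = p -> i + b = q ->
  0 < a -> 0 < b -> a <= 1 -> b <= 1 -> i = n - 1)%N.
Proof. lia. Qed.

End H.
Import H.

Theorem proposition6p2 (R : realFieldType) (n : nat)
    (E : 'I_n.+1 -> 'rV[R]_n) (X : seq 'rV[R]_n) :
  injective E ->
  affinely_independent E ->
  \sum_i E i = 0 ->
  uniq X ->
  0 \notin X ->
  (forall i, E i \in X) ->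
  (forall p q, p \in X -> q \in X -> p != q ->
     ~ exists t : R, 0 < t /\ p = t *: q) ->
  (forall A : seq 'rV[R]_n, uniq A -> {subset A <= X} -> size A = n.+1 ->
     good_position A) ->
  forall p q, p \in X -> q \in X ->
  forall Sp Sq : {set 'I_n.+1}, is_support E p Sp -> is_support E q Sq ->
    [\/ Sp :&: Sq = set0,
        Sp \subset Sq \/ Sq \subset Sp,
        Sp :|: Sq = setT /\ #|Sp :&: Sq| = 1%N
      | Sp :|: Sq = setT /\ #|Sp :&: Sq| = (n - 1)%N].
Proof.
move=> Einj hai hs uX X0 EX hmult hgood p q pX qX Sp Sq hSp hSq.
have [al [hp PT]] := support_rep hs hSp.
have [be [hq QT]] := support_rep hs hSq.
case: (eqVneq (Sp :&: Sq) set0) => [I0 | /set0Pn [j]]; first by constructor 1.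
rewrite inE => /andP [jP jQ].
case: (boolP (Sp \subset Sq)) => [s|nsPQ]; first by constructor 2; left.
case: (boolP (Sq \subset Sp)) => [s|nsQP]; first by constructor 2; right.
have [a aP aQ] := subsetPn nsPQ.
have [b bQ bP] := subsetPn nsQP.
case: (boolP (Sp :|: Sq == setT)) => [/eqP U | nU]; last first.
  have [m _ mU] : exists2 m, m \in [set: 'I_n.+1] & m \notin Sp :|: Sq.
    by apply/subsetPn; rewrite subTset.
  move: mU; rewrite inE negb_or => /andP [mP mQ].
  by case: (case1_contra Einj hai hs pX qX EX hgood hp hq aP aQ bQ bP jP jQ mP mQ).
case: (boolP (#|Sp :&: Sq| == 1%N)) => [/eqP c1 | c1]; first by constructor 3.
case: (boolP (#|Sp :&: Sq| == (n - 1)%N)) => [/eqP c2 | c2]; first by constructor 4.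
exfalso.
have hI : (0 < #|Sp :&: Sq|)%N by apply/card_gt0P; exists j; rewrite inE jP.
have hA : (0 < #|Sp :\: Sq|)%N by apply/card_gt0P; exists a; rewrite inE aP aQ.
have hB : (0 < #|Sq :\: Sp|)%N by apply/card_gt0P; exists b; rewrite inE bP bQ.
have e1 := cardsUI Sp Sq; have e2 := cardsID Sq Sp; have e3 := cardsID Sp Sq.
rewrite U cardsT card_ord in e1; rewrite setIC in e3.
have hI2 : (1 < #|Sp :&: Sq|)%N by move: c1 hI; case: #|_| => [|[|]].
have [j1 [j2 [j1I j2I j12]]] := card_gt1P hI2.
move: j1I j2I; rewrite !inE => /andP [j1P j1Q] /andP [j2P j2Q].
case: (leqP #|Sp :\: Sq| 1) => hA1.
  case: (leqP #|Sq :\: Sp| 1) => hB1.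
    move/eqP: c2; apply; exact: (arith e1 e2 e3).
  have [u1 [u2 [u1B u2B u12]]] := card_gt1P hB1.
  move: u1B u2B; rewrite !inE => /andP [u1P u1Q] /andP [u2P u2Q].
  exact: (main_contra Einj hai hs qX pX EX hgood hq hp QT u1Q u1P u2Q u2P u12 aP aQ j1Q j1P j2Q j2P j12).
have [u1 [u2 [u1B u2B u12]]] := card_gt1P hA1.
move: u1B u2B; rewrite !inE => /andP [u1Q u1P] /andP [u2Q u2P].
exact: (main_contra Einj hai hs pX qX EX hgood hp hq PT u1P u1Q u2P u2Q u12 bQ bP j1P j1Q j2P j2Q j12).
Qed.
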